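(* Let $X$ be a real Banach space. The following statements are equivalent. (1) $X$ is CLUR. (2) $S_X$ is sup-compact on $X\setminus\{0\}$. (3) For every $x\in X\setminus\{0\}$, $Q_{S_X}(x)$ is compact and $Q_{S_X}(x,\frac1n)\xrightarrow{V}Q_{S_X}(x)$. (4) For every $x\in X\setminus\{0\}$, $Q_{S_X}(x)$ is compact and $Q_{S_X}(x,\frac1n)\xrightarrow{H}Q_{S_X}(x)$. (5) $Q_{S_X}(x)$ is compact for every $x\in X\setminus\{0\}$ and $S_X$ is strongly remotal on $X\setminus\{0\}$. (6) $\alpha(Q_{S_X}(x,\frac1n))\to 0$ for every $x\in X\setminus\{0\}$.
   Context: $B_X,S_X$ are the closed unit ball and unit sphere of $X$. For non-empty bounded $F$, $x\in X$, $\delta\ge0$: $r(F,x)=\sup_{y\in F}\|x-y\|$, $Q_F(x,\delta)=\{y\in F:\|x-y\|\ge r(F,x)-\delta\}$, $Q_F(x)=Q_F(x,0)$. $F$ is sup-compact on $A$ if for each $x\in A$ every sequence $(y_n)$ in $F$ with $\|x-y_n\|\to r(F,x)$ has a subsequence converging to an element of $F$. $F$ is strongly remotal on $A$ if for every $x\in A$ and $\epsilon>0$ there is $\delta>0$ with $Q_F(x,\delta)\subseteq Q_F(x)+\epsilon B_X$. $X$ is CLUR if whenever $x\in S_X$ and $(x_n)\subseteq S_X$ satisfy $\|\frac{x_n+x}{2}\|\to1$, $(x_n)$ has a convergent subsequence. For closed bounded sets $C_n,C_0$: $C_n\xrightarrow{V}C_0$ means both (a) for every open $U\supseteq C_0$,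 eventually $C_n\subseteq U$, and (b) for every open $U$ with $C_0\cap U\ne\emptyset$, eventually $C_n\cap U\neq\emptyset$; $C_n\xrightarrow{H}C_0$ means for every $\epsilon>0$, eventually $C_n\subseteq C_0+\epsilon B_X$ and $C_0\subseteq C_n+\epsilon B_X$. The Kuratowski measure of non-compactness is $\alpha(A)=\inf\{\epsilon>0: A\subseteq E+\epsilon B_X$ for some finite $E\subseteq X\}$. *)

(* Defs.v *)
From HB Require Import structures.
From mathcomp Require Import all_boot all_order all_algebra.
From mathcomp Require Import all_classical all_reals all_analysis.
Set Implicit Arguments. Unset Strict Implicit. Unset Printing Implicit Defensive.
Import Order.TTheory GRing.Theory Num.Theory.
Import numFieldNormedType.Exports.
Local Open Scope classical_set_scope.
Local Open Scope ring_scope.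

Section Defs.
Context {R : realType} {X : normedModType R}.

Definition unit_ball : set X := [set x | `|x| <= 1].
Definition unit_sphere : set X := [set x | `|x| = 1].

Definition farthest_dist (F : set X) (x : X) : R :=
  sup [set `|x - y| | y in F].

Definition Qset (F : set X) (x : X) (delta : R) : set X :=
  [set y | F y /\ farthest_dist F x - delta <= `|x - y|].

Definition add_ball (C : set X) (eps : R) : set X :=
  [set z | exists q b, [/\ C q, unit_ball b & z = q + eps *: b]].

Definition subsequence (phi : nat -> nat) : Prop :=
  forall m n, (m < n)%N -> (phi m < phi n)%N.

Definition sup_compact (F A : set X) : Prop :=
  forall x, A x -> forall y : nat -> X, (forall n, F (y n)) ->
    (fun n => `|x - y n|) @ \oo --> farthest_dist F x ->
    exists phi, subsequence phi /\ exists z, F z /\ (y \o phi) @ \oo --> z.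

Definition strongly_remotal (F A : set X) : Prop :=
  forall x, A x -> forall eps : R, 0 < eps -> exists delta : R, 0 < delta /\
    Qset F x delta `<=` add_ball (Qset F x 0) eps.

Definition CLUR : Prop :=
  forall (x : X) (xn : nat -> X), unit_sphere x -> (forall n, unit_sphere (xn n)) ->
    (fun n => `|(2 : R)^-1 *: (xn n + x)|) @ \oo --> (1 : R) ->
    exists phi, subsequence phi /\ exists z : X, (xn \o phi) @ \oo --> z.

Definition vietoris_cvg (C : nat -> set X) (C0 : set X) : Prop :=
  (forall U : set X, open U -> C0 `<=` U -> \forall n \near \oo, C n `<=` U) /\
  (forall U : set X, open U -> C0 `&` U !=set0 -> \forall n \near \oo, C n `&` U !=set0).

Definition hausdorff_cvg (C : nat -> set X) (C0 : set X) : Prop :=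
  forall eps : R, 0 < eps -> \forall n \near \oo,
    C n `<=` add_ball C0 eps /\ C0 `<=` add_ball (C n) eps.

(* Kuratowski measure of non-compactness, valued in extended reals (+oo if no finite cover) *)
Definition kuratowski (A : set X) : \bar R :=
  ereal_inf [set (e%:E) | e in [set e : R | 0 < e /\
     exists E : set X, finite_set E /\ A `<=` add_ball E e]].

End Defs.

(* Main.v *)
Require Import Defs.
From HB Require Import structures.
From mathcomp Require Import all_boot all_order all_algebra.
From mathcomp Require Import all_classical all_reals all_analysis.
From mathcomp Require Import lra finmap.
Set Implicit Arguments. Unset Strict Implicit. Unset Printing Implicit Defensive.
Import Order.TTheory GRing.Theory Num.Theory.
Import numFieldNormedType.Exports.
Local Open Scope classical_set_scope.
Local Open Scope ring_scope.

Section Seq.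
Context {R : realType} {X : normedModType R}.

Lemma inv_lt (e : R) : 0 < e -> exists k : nat, k.+1%:R^-1 < e.
Proof. by move=> e0; have [k] := ltr_add_invr e0; rewrite add0r; exists k. Qed.

Lemma invS_le (m n : nat) : (m <= n)%N -> n.+1%:R^-1 <= m.+1%:R^-1 :> R.
Proof. by move=> mn; rewrite lef_pV2 ?posrE // ler_nat ltnS. Qed.

Lemma subseq_ge phi : subsequence phi -> forall n, (n <= phi n)%N.
Proof.
move=> sp; elim=> [|n IH] //; apply: leq_ltn_trans IH _; exact: sp.
Qed.

Lemma extract (u : nat -> X) (z : X) :
  (forall e : R, 0 < e -> forall N, exists2 n, (N <= n)%N & `|z - u n| < e) ->
  exists phi, subsequence phi /\ (u \o phi) @ \oo --> z.
Proof.
move=> H.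
have /choice [g Hg] : forall kN : nat * nat, exists n,
    (kN.2 <= n)%N /\ `|z - u n| < kN.1.+1%:R^-1.
  move=> [k N]; have [n ? ?] := H (k.+1%:R^-1) ltac:(by rewrite invr_gt0 ltr0Sn) N; by exists n.
pose phi := fix phi k := if k is k'.+1 then g (k, (phi k').+1) else g (0, 0)%N.
have phiS k : (phi k < phi k.+1)%N by have [] := Hg (k.+1, (phi k).+1).
have sp : subsequence phi by move=> m n; apply: (homo_ltn (@ltn_trans) phiS).
exists phi; split => //.
have Hphi k : `|z - u (phi k)| < k.+1%:R^-1.
  by case: k => [|k]; [have [] := Hg (0, 0)%N | have [] := Hg (k.+1, (phi k).+1)].
apply/cvgrPdist_lt => e e0; have [k0 k0e] := inv_lt e0.
near=> k; apply: lt_le_trans (ltW k0e).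
apply: (lt_le_trans (Hphi k)); apply: invS_le.
by near: k; apply: nbhs_infty_ge.
Unshelve. all: by end_near. Qed.

End Seq.
Lemma ballN {R : realType} {X : normedModType R} (c y : X) (e : R) :
  ball c e y = (`|c - y| < e).
Proof. by rewrite -ball_normE. Qed.

Section Geo.
Context {R : realType} {X : normedModType R}.
Local Notation S := (@unit_sphere R X).

Lemma AB_in (C : set X) (q w : X) (e : R) : 0 < e -> C q -> `|q - w| <= e ->
  add_ball C e w.
Proof.
move=> e0 Cq qw; exists q, (e^-1 *: (w - q)); split => //.
  rewrite /unit_ball /= normrZ ger0_norm ?invr_ge0 ?(ltW e0) // distrC.
  by rewrite ler_pdivrMl // mulr1.
by rewrite scalerA mulfV ?gt_eqF // scale1r addrC subrK.
Qed.

Lemma AB_le (C : set X) (e1 e2 : R) : 0 < e1 -> e1 <= e2 ->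
  add_ball C e1 `<=` add_ball C e2.
Proof.
move=> e10 e12 w [q [b [Cq Bb ->]]]; apply: (AB_in (lt_le_trans e10 e12) Cq).
rewrite opprD addrA subrr add0r normrN normrZ ger0_norm ?(ltW e10) //.
move: Bb; rewrite /unit_ball /= => Bb; have := normr_ge0 b; nra.
Qed.

Lemma AB_dist (C : set X) (e : R) w : 0 < e -> add_ball C e w ->
  exists2 q, C q & `|q - w| <= e.
Proof.
move=> e0 [q [b [Cq Bb ->]]]; exists q => //.
rewrite opprD addrA subrr add0r normrN normrZ ger0_norm ?(ltW e0) //.
move: Bb; rewrite /unit_ball /= => Bb; have := normr_ge0 b; nra.
Qed.

Lemma AB_self (C : set X) (e : R) : C `<=` add_ball C e.
Proof.
move=> w Cw; exists w, 0; split => //; last by rewrite scaler0 addr0.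
by rewrite /unit_ball /= normr0.
Qed.

Lemma sphere_close (p : X) :
  (forall e : R, 0 < e -> exists w, S w /\ `|p - w| < e) -> S p.
Proof.
move=> H; rewrite /S /unit_sphere /=; apply/eqP; rewrite eq_le; apply/andP; split.
  apply/ler_addgt0Pr => e e0; have [w [Sw pw]] := H e e0.
  have := lerB_dist p w; move: Sw; rewrite /unit_sphere /= => Sw; lra.
apply/ler_addgt0Pr => e e0; have [w [Sw pw]] := H e e0.
have := lerB_dist w p; rewrite distrC; move: Sw; rewrite /unit_sphere /= => Sw; lra.
Qed.

Lemma Qmono (x : X) (d1 d2 : R) : d1 <= d2 -> Qset S x d1 `<=` Qset S x d2.
Proof. by move=> d12 y [Sy h]; split => //; apply: le_trans h; lra. Qed.

Lemma fd_ub0 (x y : X) : S y -> `|x - y| <= `|x| + 1.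
Proof. by move=> Sy; rewrite -Sy ler_normB. Qed.

Lemma fd_eq (x : X) : x != 0 -> farthest_dist S x = `|x| + 1.
Proof.
move=> x0; have nx : 0 < `|x| by rewrite normr_gt0.
set y0 : X := - (`|x|^-1 *: x).
have Sy0 : S y0 by rewrite /S /unit_sphere /= /y0 normrN normrZ normfV normr_id mulVf // gt_eqF.
have dy0 : `|x - y0| = `|x| + 1.
  rewrite /y0 opprK -{1}(scale1r x) -scalerDl normrZ ger0_norm; last first.
    by rewrite addr_ge0 // invr_ge0 ltW.
  by rewrite mulrDl mul1r mulVf ?gt_eqF.
rewrite /farthest_dist; apply/eqP; rewrite eq_le; apply/andP; split.
  apply: ge_sup; first by exists (`|x - y0|), y0.
  by move=> _ [y Sy <-]; exact: fd_ub0.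
rewrite -dy0; apply: sup_upper_bound; last by exists y0.
split; first by exists (`|x - y0|), y0.
by exists (`|x| + 1) => _ [y Sy <-]; exact: fd_ub0.
Qed.

Lemma fd_ub (x y : X) : x != 0 -> S y -> `|x - y| <= farthest_dist S x.
Proof. by move=> x0 Sy; rewrite fd_eq //; exact: fd_ub0. Qed.

Lemma Qclose (x p : X) : x != 0 ->
  (forall e : R, 0 < e -> exists w, [/\ S w, `|p - w| < e &
      farthest_dist S x - e <= `|x - w|]) -> Qset S x 0 p.
Proof.
move=> x0 H; split.
  by apply: sphere_close => e e0; have [w [Sw pw _]] := H e e0; exists w.
rewrite subr0; apply/ler_addgt0Pr => e e0.
have [w [Sw pw xw]] := H (e / 2) (divr_gt0 e0 (ltr0Sn _ 1)).
have := ler_distD p x w; lra.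
Qed.

End Geo.
Section Ultra.
Context {R : realType} {X : completeNormedModType R}.

Lemma ultra_fin (F : set_system X) (P : X -> set X) : UltraFilter F ->
  forall s : seq X, F [set y | exists2 e, e \in s & P e y] -> exists2 e, e \in s & F (P e).
Proof.
move=> UF; elim=> [|a s IH] Fs.
  have : F set0 by apply: filterS Fs => y [].
  by move/filter_not_empty.
have [Fa|Fna] := in_ultra_setVsetC (P a) UF; first by exists a => //; rewrite mem_head.
have [e es Fe] : exists2 e, e \in s & F (P e).
  apply: IH; apply: filterS (filterI Fs Fna) => y [[e]].
  by rewrite in_cons => /orP[/eqP-> //|es Pe _]; exists e.
by exists e => //; rewrite in_cons es orbT.
Qed.

Lemma ultra_cvg (F : set_system X) : UltraFilter F ->
  (forall e : R, 0 < e -> exists E : seq X, F (add_ball [set` E] e)) ->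
  exists p : X, F --> p.
Proof.
move=> UF H; suff : cvg F by move/cvg_ex. apply: cauchy_cvg; apply: cauchy_exP => e e0.
have [E FE] := H (e / 2) (divr_gt0 e0 (ltr0Sn _ 1)).
have [c cE Fc] : exists2 c, c \in E & F (ball c e).
  apply: (ultra_fin UF); apply: filterS FE => y [q [b [Eq Bb ->]]].
  exists q => //; rewrite ballN opprD addrA subrr add0r normrN normrZ.
  rewrite gtr0_norm ?divr_gt0 //; have nb0 := normr_ge0 b.
  move: Bb; rewrite /unit_ball /= => Bb; nra.
by exists c.
Qed.
End Ultra.

Section Main.
Context {R : realType} {X : completeNormedModType R}.
Local Notation S := (@unit_sphere R X).

Definition SC (x : X) := forall y : nat -> X, (forall n, S (y n)) ->
  (fun n => `|x - y n|) @ \oo --> farthest_dist S x ->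
  exists phi, subsequence phi /\ exists z, S z /\ (y \o phi) @ \oo --> z.

Definition NN (x : X) := forall e : R, 0 < e -> exists n : nat, exists s : seq X,
  Qset S x n.+1%:R^-1 `<=` add_ball [set` s] e.

Lemma Qseq_cvg (x : X) (y : nat -> X) : x != 0 ->
  (forall n, Qset S x n.+1%:R^-1 (y n)) ->
  (fun n => `|x - y n|) @ \oo --> farthest_dist S x.
Proof.
move=> x0 Hy; apply/cvgrPdist_le => e e0; have [k ke] := inv_lt e0.
near=> n; have [Sy h] := Hy n; have := fd_ub x0 Sy.
have : n.+1%:R^-1 <= k.+1%:R^-1 :> R by apply: invS_le; near: n; exact: nbhs_infty_ge.
move=> h1 h2; rewrite ger0_norm ?subr_ge0 //; apply: le_trans (ltW ke); apply: le_trans h1; by rewrite lerBlDr addrC -lerBlDr.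
Unshelve. all: by end_near. Qed.

Lemma sub_near (P : nat -> Prop) phi : subsequence phi ->
  (\forall n \near \oo, P n) -> \forall k \near \oo, P (phi k).
Proof.
move=> sp [N _ HN]; exists N => // k /= Nk; apply: HN => /=.
exact: leq_trans Nk (subseq_ge sp k).
Qed.

Lemma SC_limQ (x : X) y phi z : x != 0 ->
  (fun n => `|x - y n|) @ \oo --> farthest_dist S x -> (forall n, S (y n)) ->
  subsequence phi -> (y \o phi) @ \oo --> z -> Qset S x 0 z.
Proof.
move=> x0 hc Sy sp hz; apply: Qclose => // e e0.
have /cvgrPdist_lt/(_ e e0) h1 := hz.
have /cvgrPdist_lt/(_ e e0) h2 := hc.
have h3 := sub_near sp h2.
have [k [/= k1 k2]] := filter_ex (filterI h1 h3).
exists (y (phi k)); split => //.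
have := ler_norm (farthest_dist S x - `|x - y (phi k)|); lra.
Qed.

Lemma SC_G (x : X) : x != 0 -> SC x -> forall T : set X,
  (forall z, Qset S x 0 z -> nbhs z T) ->
  \forall n \near \oo, Qset S x n.+1%:R^-1 `<=` T.
Proof.
move=> x0 sc T HT; apply: contrapT => nT.
have /choice [y Hy] : forall N : nat, exists y, Qset S x N.+1%:R^-1 y /\ ~ T y.
  move=> N; apply: contrapT => hN; apply: nT; exists N => // n /= Nn w Qw.
  apply: contrapT => nTw; apply: hN; exists w; split => //.
  by apply: Qmono Qw; exact: invS_le.
have Sy n : S (y n) by case: (Hy n) => [[]].
have hc := Qseq_cvg x0 (fun n => (Hy n).1).
have [phi [sp [z [Sz hz]]]] := sc y Sy hc.
have Qz := SC_limQ x0 hc Sy sp hz.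
have hT : \forall k \near \oo, T (y (phi k)) := hz T (HT z Qz).
have [k Tk] := filter_ex hT; exact: (Hy (phi k)).2 Tk.
Qed.

Lemma SC_N (x : X) : x != 0 -> SC x -> NN x.
Proof.
move=> x0 sc e e0; apply: contrapT => nN.
have /choice [f Hf] : forall ns : nat * seq X, exists y,
    Qset S x ns.1.+1%:R^-1 y /\ ~ add_ball [set` ns.2] e y.
  move=> [n s]; apply: contrapT => h; apply: nN; exists n, s => w Qw.
  by apply: contrapT => nw; apply: h; exists w.
pose s := fix s n := if n is n'.+1 then f (n', s n') :: s n' else [::].
pose y n := f (n, s n).
have sy i n : (i < n)%N -> y i \in s n.
  elim: n => // n IH; rewrite ltnS leq_eqVlt => /orP[/eqP->|lt].
    by rewrite /= in_cons eqxx.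
  by rewrite /= in_cons IH ?orbT.
have Qy n : Qset S x n.+1%:R^-1 (y n) := (Hf (n, s n)).1.
have Sy n : S (y n) by case: (Qy n).
have hc := Qseq_cvg x0 Qy.
have [phi [sp [z [Sz hz]]]] := sc y Sy hc.
have e20 : 0 < e / 2 by rewrite divr_gt0.
have /cvgrPdist_lt/(_ (e/2) e20) [N _ HN] := hz.
have a : `|z - y (phi N)| < e / 2 := HN N (leqnn N).
have b : `|z - y (phi N.+1)| < e / 2 := HN N.+1 (leqnSn N).
apply: (Hf (phi N.+1, s (phi N.+1))).2.
apply: (AB_in e0 (q := y (phi N))); first exact: sy (sp _ _ (ltnSn N)).
have := ler_distD z (y (phi N)) (y (phi N.+1)); rewrite (distrC (y (phi N)) z).
move=> h; apply: le_trans h _; apply: ltW; have := ltrD a b.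
by rewrite -splitr.
Qed.

Lemma N_compact (x : X) : x != 0 -> NN x -> compact (Qset S x 0).
Proof.
move=> x0 nn; rewrite compact_ultra => F UF FQ.
have [p Fp] : exists p : X, F --> p.
  apply: ultra_cvg => e e0; have [n [s hs]] := nn e e0; exists s.
  apply: filterS FQ => w Qw; apply: hs; apply: Qmono Qw; by rewrite invr_ge0.
exists p; split => //.
apply: Qclose => // e e0.
have Fb : F (ball p e) by apply: Fp; apply: nbhsx_ballx.
have [w [Qw bw]] := filter_ex (filterI FQ Fb).
exists w; case: Qw => Sw h; split => //; first by rewrite ballN in bw.
apply: le_trans h; rewrite subr0 lerBlDr lerDl; exact: ltW.
Qed.

Lemma N_SC (x : X) : x != 0 -> NN x -> SC x.
Proof.
move=> x0 nn y Sy hc.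
have [F [UF GF]] := @ultraFilterLemma _ (y @ \oo) _.
have [p Fp] : exists p : X, F --> p.
  apply: ultra_cvg => e e0; have [n [s hs]] := nn e e0; exists s; apply: GF.
  have /cvgrPdist_lt/(_ (n.+1%:R^-1) ltac:(by rewrite invr_gt0)) h := hc.
  have h' : \forall m \near \oo, add_ball [set` s] e (y m).
    apply: filterS h => m hm; apply: hs; split => //.
    have := ler_norm (farthest_dist S x - `|x - y m|) => h1.
    have h2 := le_lt_trans h1 hm.
    by rewrite lerBlDr addrC -lerBlDr; apply: ltW.
  exact: h'.
have cl : forall e : R, 0 < e -> forall N, exists2 n, (N <= n)%N & `|p - y n| < e.
  move=> e e0 N; apply: contrapT => h.
  have G1 : (y @ \oo) (~` ball p e).
    exists N => // n /= Nn; rewrite ballN => pn; apply: h; by exists n.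
  have F1 := GF _ G1.
  have F2 : F (ball p e) by apply: Fp; apply: nbhsx_ballx.
  by have [w [w1 w2]] := filter_ex (filterI F1 F2).
have [phi [sp hphi]] := extract cl.
exists phi; split => //; exists p; split => //.
apply: sphere_close => e e0.
have /cvgrPdist_lt/(_ e e0) [N _ HN] := hphi.
by exists (y (phi N)); split => //; exact: HN N (leqnn N).
Qed.

Lemma compact_SR_N (x : X) : compact (Qset S x 0) ->
  (forall e : R, 0 < e -> exists d : R, 0 < d /\
     Qset S x d `<=` add_ball (Qset S x 0) e) -> NN x.
Proof.
move=> cQ sr e e0.
have e20 : 0 < e / 2 by rewrite divr_gt0.
move: cQ; rewrite compact_cover => /(_ X (Qset S x 0) (fun z => ball z (e/2))).
case=> [z _|z Qz|D' D'sub cov].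
- exact: ball_open.
- by exists z => //; exact: ballxx.
have [d [d0 hd]] := sr _ e20.
have [n hn] := inv_lt d0.
exists n, (enum_fset D') => w Qw.
have [q Qq qw] := AB_dist e20 (hd w (Qmono (ltW hn) Qw)).
have [c cD bc] := cov q Qq.
apply: (AB_in e0 (q := c)); first exact: cD.
rewrite ballN in bc; apply: le_trans (ler_distD q c w) _.
rewrite [X in _ <= X](splitr e); exact: lerD (ltW bc) qw.
Qed.

Lemma SC_CLUR : (forall x : X, x != 0 -> SC x) -> @CLUR R X.
Proof.
move=> sc x xn Sx Sxn hc.
have nx : `|- x| = 1 by rewrite normrN.
have x0 : - x != 0 by rewrite -normr_gt0 nx.
have hc' : (fun n => `|- x - xn n|) @ \oo --> farthest_dist S (- x).
  rewrite fd_eq // nx; apply/cvgrPdist_lt => e e0.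
  have e20 : 0 < e / 2 by rewrite divr_gt0.
  have /cvgrPdist_lt/(_ (e/2) e20) := hc.
  apply: filterS => n; rewrite normrZ ger0_norm ?invr_ge0 ?ler0n //.
  rewrite -opprD normrN => h.
  have -> : 1 + 1 - `|x + xn n| = 2 * (1 - 2^-1 * `|xn n + x|).
    by rewrite (addrC x) mulrBr mulr1 mulrA divff ?pnatr_eq0 // mul1r.
  rewrite normrM ger0_norm ?ler0n //.
  lra.
have [phi [sp [z [Sz hz]]]] := sc _ x0 xn Sxn hc'.
by exists phi; split => //; exists z.
Qed.

Lemma CLUR_SC : @CLUR R X -> forall x : X, x != 0 -> SC x.
Proof.
move=> cl x x0 y Sy hc.
set a := `|x|.
have a0 : 0 < a by rewrite normr_gt0.
set u : X := a^-1 *: x.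
have xu : x = a *: u by rewrite /u scalerA mulfV ?gt_eqF // scale1r.
have Su : S u by rewrite /S /unit_sphere /= /u normrZ normfV normr_id mulVf // gt_eqF.
have Sny n : S (- y n) by rewrite /S /unit_sphere /= normrN; exact: Sy.
have fdx : farthest_dist S x = a + 1 by rewrite fd_eq.
have Snorm w : S w -> `|w| = 1 by [].
have tle n : `|u - y n| <= 2.
  by have := ler_normB u (y n); rewrite (Snorm _ Su) (Snorm _ (Sy n)).
have hcl : (fun n => `|2^-1 *: (- y n + u)|) @ \oo --> (1 : R).
  have eq1 n : `|2^-1 *: (- y n + u)| = 2^-1 * `|u - y n|.
    by rewrite normrZ ger0_norm ?invr_ge0 ?ler0n // addrC.
  apply/cvgrPdist_le => e e0.
  have [a1|a1] := leP 1 a.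
    have e1 w : x - w = (u - w) + (a - 1) *: u.
      by rewrite xu scalerBl scale1r [RHS]addrC [RHS]addrA subrK.
    have /cvgrPdist_lt/(_ e e0) := hc; apply: filterS => n h.
    have h1 : `|x - y n| <= `|u - y n| + (a - 1).
      rewrite e1; apply: le_trans (ler_normD _ _) _; rewrite normrZ (Snorm _ Su) mulr1.
      by rewrite ger0_norm ?subr_ge0.
    have h2 := ler_norm (farthest_dist S x - `|x - y n|).
    have h3 := tle n.
    rewrite eq1 fdx in h2 h *; rewrite ger0_norm; last by rewrite subr_ge0; lra.
    lra.
  have e1 w : x - w = a *: (u - w) + (1 - a) *: (- w).
    by rewrite xu scalerBl scale1r scalerN opprK scalerBr addrACA addNr addr0.
  have ae0 : 0 < a * e by rewrite mulr_gt0.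
  have /cvgrPdist_lt/(_ (a * e) ae0) := hc; apply: filterS => n h.
  have h1 : `|x - y n| <= a * `|u - y n| + (1 - a).
    rewrite e1; apply: le_trans (ler_normD _ _) _; rewrite !normrZ normrN (Snorm _ (Sy n)) mulr1.
    by rewrite !ger0_norm ?subr_ge0 // ltW.
  have h2 := ler_norm (farthest_dist S x - `|x - y n|).
  have h3 := tle n.
  rewrite eq1 fdx in h2 h *; rewrite ger0_norm; last by rewrite subr_ge0; lra.
  nra.
have [phi [sp [z hz]]] := cl u (fun n => - y n) Su Sny hcl.
have hz' : (y \o phi) @ \oo --> - z.
  apply/cvgrPdist_lt => e e0; have /cvgrPdist_lt/(_ e e0) := hz.
  by apply: filterS => k /=; rewrite opprK -opprD normrN.
exists phi; split => //; exists (- z); split => //.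
apply: sphere_close => e e0; have /cvgrPdist_lt/(_ e e0) [N _ HN] := hz'.
by exists (y (phi N)); split => //; exact: HN N (leqnn N).
Qed.

Lemma kur_ge0 (A : set X) : (0 <= kuratowski A)%E.
Proof.
apply: le_ereal_inf_tmp => _ [e [e0 _] <-]; rewrite lee_fin; exact: ltW.
Qed.

Lemma kur_le (A : set X) (e : R) (s : seq X) : 0 < e ->
  A `<=` add_ball [set` s] e -> (kuratowski A <= e%:E)%E.
Proof.
move=> e0 As; apply: ereal_inf_lbound; exists e => //; split => //.
by exists [set` s]; split => //; exact: finite_seq.
Qed.

Lemma kur_lt (A : set X) (e : R) : 0 < e -> (kuratowski A < e%:E)%E ->
  exists s : seq X, A `<=` add_ball [set` s] e.
Proof.
move=> e0 /ereal_inf_lt [_ [e' [e'0 [E [fE AE]]] <-]]; rewrite lte_fin => e'e.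
have [s Es] := (finite_seqP E).1 fE.
exists s => w /AE; rewrite Es; apply: (AB_le e'0 (ltW e'e)).
Qed.

Lemma fine_le (k : \bar R) (e : R) : (0 <= k)%E -> (k <= e%:E)%E ->
  `|0 - fine k| <= e.
Proof.
case: k => [r| |] //=; rewrite ?lee_fin => h1 h2.
by rewrite sub0r normrN ger0_norm.
Qed.

Lemma N_kur (x : X) : NN x ->
  (fun n => kuratowski (Qset S x n.+1%:R^-1)) @ \oo --> 0%E.
Proof.
move=> nn.
have ev e : 0 < e -> \forall m \near \oo,
    (kuratowski (Qset S x m.+1%:R^-1) <= e%:E)%E.
  move=> e0; have [n [s hs]] := nn e e0; exists n => // m /= nm.
  apply: (kur_le e0); apply: subset_trans hs; apply: Qmono; exact: invS_le.
apply/fine_cvgP; split.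
  apply: filterS (ev 1 ltr01) => m h.
  rewrite ge0_fin_numE ?kur_ge0 //; exact: le_lt_trans h (ltry _).
apply/cvgrPdist_le => e e0; apply: filterS (ev e e0) => m h.
exact: fine_le (kur_ge0 _) h.
Qed.

Lemma kur_N (x : X) :
  (fun n => kuratowski (Qset S x n.+1%:R^-1)) @ \oo --> 0%E -> NN x.
Proof.
move=> /fine_cvgP [hf hc] e e0.
have /cvgrPdist_lt/(_ e e0) h := hc.
have [n /= [fn hn]] := filter_ex (filterI hf h).
exists n; apply: (kur_lt (A := Qset S x n.+1%:R^-1) (e := e) e0).
rewrite -(fineK fn) lte_fin; apply: le_lt_trans hn.
by rewrite sub0r normrN ler_norm.
Qed.

End Main.

Unset Implicit Arguments. Set Strict Implicit. Set Printing Implicit Defensive.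

Theorem theorem3p4 (R : realType) (X : completeNormedModType R) :
  let S := @unit_sphere R X in
  let X0 := [set x : X | x != 0] in
  let P1 := @CLUR R X in
  let P2 := sup_compact S X0 in
  let P3 := forall x : X, X0 x -> compact (Qset S x 0) /\
              vietoris_cvg (fun n => Qset S x (n.+1%:R)^-1) (Qset S x 0) in
  let P4 := forall x : X, X0 x -> compact (Qset S x 0) /\
              hausdorff_cvg (fun n => Qset S x (n.+1%:R)^-1) (Qset S x 0) in
  let P5 := (forall x : X, X0 x -> compact (Qset S x 0)) /\ strongly_remotal S X0 in
  let P6 := forall x : X, X0 x ->
              (fun n => kuratowski (Qset S x (n.+1%:R)^-1)) @ \oo --> 0%E in
  [/\ P1 <-> P2, P1 <-> P3, P1 <-> P4, P1 <-> P5 & P1 <-> P6].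
Proof.
move=> S X0 P1 P2 P3 P4 P5 P6.
have e2 : P2 <-> (forall x : X, x != 0 -> SC x) by [].
have P12 : P1 <-> P2 by rewrite e2; split; [exact: CLUR_SC | exact: SC_CLUR].
have P23 : P2 -> P3.
  move=> /e2 sc x x0; have nn := SC_N x0 (sc x x0).
  split; first exact: N_compact.
  split.
    move=> U Uo QU; apply: (SC_G x0 (sc x x0)) => z Qz.
    by move: Uo; rewrite openE => /(_ z (QU z Qz)).
  move=> U Uo [w [Qw Uw]]; apply: nearW => n; exists w; split => //.
  by apply: Qmono Qw; rewrite invr_ge0.
have P24 : P2 -> P4.
  move=> /e2 sc x x0; have nn := SC_N x0 (sc x x0).
  split; first exact: N_compact.
  move=> e e0.
  have : \forall n \near \oo, Qset S x n.+1%:R^-1 `<=` add_ball (Qset S x 0) e.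
    apply: (SC_G x0 (sc x x0)) => z Qz; apply/nbhs_ballP; exists e => // w.
    by rewrite ballN => zw; apply: AB_in e0 Qz (ltW zw).
  apply: filterS => n h; split => // w Qw; apply: AB_self.
  by apply: Qmono Qw; rewrite invr_ge0.
have P25 : P2 -> P5.
  move=> /e2 sc; split.
    by move=> x x0; exact: N_compact x0 (SC_N x0 (sc x x0)).
  move=> x x0 e e0.
  have : \forall n \near \oo, Qset S x n.+1%:R^-1 `<=` add_ball (Qset S x 0) e.
    apply: (SC_G x0 (sc x x0)) => z Qz; apply/nbhs_ballP; exists e => // w.
    by rewrite ballN => zw; apply: AB_in e0 Qz (ltW zw).
  move=> [N _ HN]; exists N.+1%:R^-1; split; first by rewrite invr_gt0.
  exact: HN N (leqnn N).
have P26 : P2 -> P6.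
  by move=> /e2 sc x x0; apply: N_kur; exact: SC_N x0 (sc x x0).
have P52 : P5 -> P2.
  move=> [cQ sr]; apply/e2 => x x0; apply: (N_SC x0).
  exact: compact_SR_N (cQ x x0) (sr x x0).
have P62 : P6 -> P2.
  by move=> h; apply/e2 => x x0; apply: (N_SC x0); apply: kur_N; exact: h.
have P45 : P4 -> P5.
  move=> h; split; first by move=> x x0; case: (h x x0).
  move=> x x0 e e0; have [N _ HN] := (h x x0).2 e e0.
  exists N.+1%:R^-1; split; first by rewrite invr_gt0.
  exact: (HN N (leqnn N)).1.
have P35 : P3 -> P5.
  move=> h; split; first by move=> x x0; case: (h x x0).
  move=> x x0 e e0; have [_ [hv _]] := h x x0.
  pose U := [set w : X | exists2 q, Qset S x 0 q & `|q - w| < e].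
  have Uo : open U.
    rewrite openE => w [q Qq qw]; rewrite /interior; apply/nbhs_ballP.
    exists (e - `|q - w|); first by rewrite /= subr_gt0.
    move=> v; rewrite ballN => wv; exists q => //.
    apply: le_lt_trans (ler_distD w q v) _; lra.
  have QU : Qset S x 0 `<=` U by move=> q Qq; exists q => //; rewrite subrr normr0.
  have [N _ HN] := hv U Uo QU.
  exists N.+1%:R^-1; split; first by rewrite invr_gt0.
  move=> w Qw; have [q Qq qw] := HN N (leqnn N) w Qw.
  exact: AB_in e0 Qq (ltW qw).
split.
- exact: P12.
- split; [by move/P12/P23 | by move=> /P35/P52/P12].
- split; [by move/P12/P24 | by move=> /P45/P52/P12].
- split; [by move/P12/P25 | by move=> /P52/P12].
- split; [by move/P12/P26 | by move=> /P62/P12].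
Qed.
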